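(* Let $\mathcal{N}$ be a 2-step nilpotent Lie algebra over $\mathbb{R}$ and suppose $\mathcal{N}=\mathcal{N}_0\oplus\mathcal{A}$ is a direct sum of ideals with $\mathcal{A}$ abelian and $[\mathcal{N}_0,\mathcal{N}_0]=\mathfrak{z}(\mathcal{N}_0)$, the center of $\mathcal{N}_0$. Then every Lie ring automorphism $f$ of $\mathcal{N}$ has the form $f=\mu\circ g$, where $\mu$ is a central automorphism of $\mathcal{N}$ and $g$ is a Lie ring automorphism of $\mathcal{N}$ with $g(\mathcal{N}_0)=\mathcal{N}_0$ and $g(Y)=Y$ for all $Y\in\mathcal{A}$. In particular, if $\mathcal{N}_0$ satisfies the partial automatic continuity, then so does $\mathcal{N}$.
   Context: A Lie ring automorphism of a real Lie algebra is a bijective additive map preserving the bracket (not necessarily $\mathbb{R}$-linear). A central automorphism is a Lie ring automorphism $\mu$ with $\mu(x)-x$ in the center for all $x$. Field automorphisms: if a Lie algebra is a direct sum of ideals $\mathcal{N}_1\oplus\cdots\oplus\mathcal{N}_k$, for each $\mathcal{N}_i$ that is the realification of a complex Lie algebra choose a $\mathbb{C}$-basis $e_1,\dots,e_m$ and a field automorphism $\varphi$ of $\mathbb{C}$ fixing the structure constants and set $\sigma_i(\sum x_le_l)=\sum\varphi(x_l)e_l$, otherwise $\sigma_i=\mathrm{id}$; $\sigma_1\times\cdots\times\sigma_k$ is a field automorphism. A real nilpotent Lie algebra satisfies the partial automatic continuity if every Lie ring automorphism is a composition $\mu\circ\overline{f}\circ\sigma$ of a central automorphism $\mu$, an $\mathbb{R}$-linear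 Lie algebra automorphism $\overline{f}$ and a field automorphism $\sigma$. *)

(* Defs.v *)
(* Real Lie algebras are modelled as a finite-dimensional
   real vector space V : vectType R (R : realType, i.e. the reals) with a
   bracket br; ideals and subalgebras are subspaces {vspace V}.  All notions
   (automorphisms, center, partial automatic continuity) are defined relative
   to a subspace U of V, so that they apply both to N (U = fullv) and to the
   ideal N0 (U = N0) viewed as a Lie algebra in its own right. *)
From HB Require Import structures.
From mathcomp Require Import all_boot all_order all_algebra.
From mathcomp Require Import reals complex.
Set Implicit Arguments. Unset Strict Implicit. Unset Printing Implicit Defensive.
Import Order.TTheory GRing.Theory Num.Theory.
Local Open Scope ring_scope.

Section Lie.
Variables (R : realType) (V : vectType R) (br : V -> V -> V).

Definition is_lie_bracket : Prop :=
  [/\ forall (a : R) x y z, br (a *: x + y) z = a *: br x z + br y z,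
      forall (a : R) x y z, br x (a *: y + z) = a *: br x y + br x z,
      forall x, br x x = 0 &
      forall x y z, br x (br y z) + br y (br z x) + br z (br x y) = 0].

Definition two_step_nilpotent : Prop :=
  (forall x y z, br x (br y z) = 0) /\ exists x y, br x y != 0.

Definition is_ideal_of (U I : {vspace V}) : Prop :=
  (I <= U)%VS /\ forall x y, x \in U -> y \in I -> br x y \in I.

Definition abelian_sub (A : {vspace V}) : Prop :=
  forall x y, x \in A -> y \in A -> br x y = 0.

Definition in_center (U : {vspace V}) (x : V) : Prop :=
  x \in U /\ forall y, y \in U -> br x y = 0.

(* x lies in the derived algebra [U,U] (the span of all brackets; by
   bilinearity the real span equals the set of finite sums of brackets) *)
Definition in_derived (U : {vspace V}) (x : V) : Prop :=
  exists n (a b : 'I_n -> V),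
    (forall i, a i \in U /\ b i \in U) /\ x = \sum_(i < n) br (a i) (b i).

(* Lie ring automorphism of U: bijective additive bracket-preserving map
   U -> U (represented by a map V -> V, only its values on U matter) *)
Definition lie_ring_aut (U : {vspace V}) (f : V -> V) : Prop :=
  [/\ forall x, x \in U -> f x \in U,
      forall x y, x \in U -> y \in U -> f x = f y -> x = y,
      forall y, y \in U -> exists2 x, x \in U & f x = y,
      forall x y, x \in U -> y \in U -> f (x + y) = f x + f y &
      forall x y, x \in U -> y \in U -> f (br x y) = br (f x) (f y)].

Definition central_aut (U : {vspace V}) (mu : V -> V) : Prop :=
  lie_ring_aut U mu /\ forall x, x \in U -> in_center U (mu x - x).

Definition lin_lie_aut (U : {vspace V}) (f : V -> V) : Prop :=
  lie_ring_aut U f /\ forall (a : R) x, x \in U -> f (a *: x) = a *: f x.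



Definition cscale (J : V -> V) (z : R[i]) (x : V) : V :=
  (@complex.Re R z) *: x + (@complex.Im R z) *: J x.

Definition csum (J : V -> V) m (e : 'I_m -> V) (c : 'I_m -> R[i]) : V :=
  \sum_(l < m) cscale J (c l) (e l).

(* J makes the real Lie algebra I the realification of a complex Lie
   algebra: J is R-linear on I, J^2 = -1, and the bracket is C-bilinear *)
Definition complex_structure (I : {vspace V}) (J : V -> V) : Prop :=
  [/\ forall x, x \in I -> J x \in I,
      forall (a : R) x y, x \in I -> y \in I -> J (a *: x + y) = a *: J x + J y,
      forall x, x \in I -> J (J x) = - x &
      forall x y, x \in I -> y \in I -> br (J x) y = J (br x y)].

Definition cbasis (I : {vspace V}) (J : V -> V) m (e : 'I_m -> V) : Prop :=
  [/\ forall l, e l \in I,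
      forall x, x \in I -> (exists c, x = csum J e c) &
      forall c c', csum J e c = csum J e c' -> forall l, c l = c' l].

Definition field_aut_piece (I : {vspace V}) (s : V -> V) : Prop :=
  (forall x, x \in I -> s x = x) \/
  exists (J : V -> V) (m : nat) (e : 'I_m -> V) (phi : {rmorphism R[i] -> R[i]})
         (gam : 'I_m -> 'I_m -> 'I_m -> R[i]),
    [/\ complex_structure I J, cbasis I J e, bijective phi,
        (forall l l', br (e l) (e l') = csum J e (gam l l')) /\
          (forall l l' p, phi (gam l l' p) = gam l l' p) &
        forall c, s (csum J e c) = csum J e (fun l => phi (c l))].

Definition field_aut (U : {vspace V}) (sigma : V -> V) : Prop :=
  exists (k : nat) (Ns : 'I_k -> {vspace V}) (sg : 'I_k -> V -> V),
    [/\ (\sum_(i < k) Ns i)%VS = U,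
        directv (\sum_(i < k) Ns i),
        forall i, is_ideal_of U (Ns i),
        forall i, field_aut_piece (Ns i) (sg i) &
        forall xs : 'I_k -> V, (forall i, xs i \in Ns i) ->
          sigma (\sum_(i < k) xs i) = \sum_(i < k) sg i (xs i)].

Definition partial_auto_continuity (U : {vspace V}) : Prop :=
  forall f, lie_ring_aut U f ->
    exists mu fb sigma,
      [/\ central_aut U mu, lin_lie_aut U fb, field_aut U sigma &
          forall x, x \in U -> f x = mu (fb (sigma x))].

End Lie.

(* Main.v *)
Require Import Defs.
From HB Require Import structures.
From mathcomp Require Import all_boot all_order all_algebra.
From mathcomp Require Import reals complex.
Import GRing.Theory.
Local Open Scope ring_scope.

Section P.
Variables (R : realType) (V : vectType R) (br : V -> V -> V) (N0 A : {vspace V}).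
Hypotheses (Hlie : is_lie_bracket br) (Hsum : (N0 + A)%VS = fullv)
  (Hdir : directv (N0 + A)) (HN0 : is_ideal_of br fullv N0)
  (HA : is_ideal_of br fullv A) (Hab : abelian_sub br A)
  (Hdz : forall x, in_derived br N0 x <-> in_center br N0 x).

Local Notation p0 := (daddv_pi N0 A).
Local Notation p1 := (daddv_pi A N0).

Lemma cap0 : (N0 :&: A = 0)%VS. Proof. exact/directv_addP. Qed.
Lemma cap0' : (A :&: N0 = 0)%VS. Proof. by rewrite capvC cap0. Qed.
Lemma p0N x : p0 x \in N0. Proof. exact: memv_pi. Qed.
Lemma p1A x : p1 x \in A. Proof. exact: memv_pi. Qed.
Lemma p01 x : p0 x + p1 x = x.
Proof. by apply: daddv_pi_add; rewrite ?cap0 ?Hsum ?memvf. Qed.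
Lemma p0_id {n} : n \in N0 -> p0 n = n.
Proof. exact/daddv_pi_id/cap0. Qed.
Lemma p1_id {a} : a \in A -> p1 a = a.
Proof. exact/daddv_pi_id/cap0'. Qed.
Lemma p0_A {a} : a \in A -> p0 a = 0.
Proof. move=> Ha; have := p01 a; rewrite p1_id //. by rewrite -{3}[a]add0r => /(addIr a). Qed.
Lemma p1_N {n} : n \in N0 -> p1 n = 0.
Proof. move=> Ha; have := p01 n; rewrite p0_id //. by rewrite -{3}[n]addr0 => /(addrI n). Qed.
Lemma p0NA {n a} : n \in N0 -> a \in A -> p0 (n + a) = n.
Proof. by move=> Hn Ha; rewrite linearD /= p0_id // p0_A // addr0. Qed.
Lemma p1NA {n a} : n \in N0 -> a \in A -> p1 (n + a) = a.
Proof. by move=> Hn Ha; rewrite linearD /= (p1_N Hn) p1_id // add0r. Qed.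
Lemma capNA x : x \in N0 -> x \in A -> x = 0.
Proof. by move=> h1 h2; apply/eqP; rewrite -memv0 -cap0 memv_cap h1. Qed.
Lemma uniqNA {n a n' a'} : n \in N0 -> a \in A -> n' \in N0 -> a' \in A ->
  n + a = n' + a' -> n = n' /\ a = a'.
Proof.
move=> h1 h2 h3 h4 e; split; first by rewrite -(p0NA h1 h2) e (p0NA h3 h4).
by rewrite -(p1NA h1 h2) e (p1NA h3 h4).
Qed.

Lemma brDl x y z : br (x + y) z = br x z + br y z.
Proof. by case: Hlie => h _ _ _; have := h 1 x y z; rewrite !scale1r. Qed.
Lemma brDr x y z : br z (x + y) = br z x + br z y.
Proof. by case: Hlie => _ h _ _; have := h 1 z x y; rewrite !scale1r. Qed.
Lemma br0l z : br 0 z = 0.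
Proof. case: Hlie => h _ _ _; have := h (-1) 0 0 z.
by rewrite scaler0 addr0 scaleN1r addNr. Qed.
Lemma br0r z : br z 0 = 0.
Proof. case: Hlie => _ h _ _; have := h (-1) z 0 0.
by rewrite scaler0 addr0 scaleN1r addNr. Qed.
Lemma brNl x z : br (- x) z = - br x z.
Proof. case: Hlie => h _ _ _; have := h (-1) x 0 z.
by rewrite addr0 br0l addr0 !scaleN1r. Qed.
Lemma brZl (a : R) x z : br (a *: x) z = a *: br x z.
Proof. case: Hlie => h _ _ _; have := h a x 0 z. by rewrite addr0 br0l addr0. Qed.
Lemma br_anti x y : br x y = - br y x.
Proof.
case: Hlie => _ _ h _; have := h (x + y).
rewrite brDl !brDr !h add0r addr0 => /eqP; rewrite addr_eq0 => /eqP //.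
Qed.

Lemma brNA n a : n \in N0 -> a \in A -> br n a = 0.
Proof.
move=> Hn Ha; apply: capNA; last exact: HA.2 (memvf _) Ha.
by rewrite br_anti memvN; apply: HN0.2 (memvf _) Hn.
Qed.
Lemma brAN a n : n \in N0 -> a \in A -> br a n = 0.
Proof. by move=> Hn Ha; rewrite br_anti brNA // oppr0. Qed.

Lemma brp x y : br x y = br (p0 x) (p0 y).
Proof.
rewrite -{1}(p01 x) -{1}(p01 y) brDl !brDr (brNA _ _ (p0N x) (p1A y)).
by rewrite (brAN _ _ (p0N y) (p1A x)) (Hab _ _ (p1A x) (p1A y)) !addr0.
Qed.

Lemma brN0 u v : br u v \in N0.
Proof. by rewrite brp; apply: HN0.2 (memvf _) (p0N _). Qed.

Definition zc x := forall y, br x y = 0.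

Lemma zcA a : a \in A -> zc a.
Proof. by move=> Ha y; rewrite brp p0_A // br0l. Qed.
Lemma zc_center z : in_center br N0 z -> zc z.
Proof. by case=> Hz h y; rewrite brp p0_id // h // p0N. Qed.
Lemma center_zc z : zc z -> in_center br N0 (p0 z).
Proof.
move=> h; split; first exact: p0N.
by move=> y Hy; rewrite brp (p0_id (p0N z)) -brp h.
Qed.
Lemma zcD x y : zc x -> zc y -> zc (x + y).
Proof. by move=> h1 h2 z; rewrite brDl h1 h2 addr0. Qed.
Lemma zcN x : zc x -> zc (- x).
Proof. by move=> h z; rewrite brNl h oppr0. Qed.

Lemma derived_N0 x : in_derived br N0 x -> x \in N0.
Proof. by move/Hdz => []. Qed.


Lemma aut_full f : lie_ring_aut br fullv f ->
  [/\ injective f, forall y, exists x, f x = y,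
      forall x y, f (x + y) = f x + f y &
      forall x y, f (br x y) = br (f x) (f y)].
Proof.
case=> _ fI fS fD fM; split.
- by move=> x y; apply: fI; rewrite memvf.
- by move=> y; have [x _ e] := fS y (memvf y); exists x.
- by move=> x y; apply: fD; rewrite memvf.
- by move=> x y; apply: fM; rewrite memvf.
Qed.

Lemma aut_fullI f : injective f -> (forall y, exists x, f x = y) ->
  (forall x y, f (x + y) = f x + f y) ->
  (forall x y, f (br x y) = br (f x) (f y)) -> lie_ring_aut br fullv f.
Proof.
move=> fI fS fD fM; split=> //.
- by move=> x _; rewrite memvf.
- by move=> x y _ _; apply: fI.
- by move=> y _; have [x e] := fS y; exists x; rewrite ?memvf.
Qed.

Lemma add0 (f : V -> V) : (forall x y, f (x + y) = f x + f y) -> f 0 = 0.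
Proof. by move=> fD; apply: (addrI (f 0)); rewrite -fD !addr0. Qed.

Lemma addN (f : V -> V) : (forall x y, f (x + y) = f x + f y) -> forall x, f (- x) = - f x.
Proof.
move=> fD x; apply: (addIr (f x)); rewrite -fD !addNr; exact: add0.
Qed.

Lemma addsum (f : V -> V) : (forall x y, f (x + y) = f x + f y) ->
  forall n (F : 'I_n -> V), f (\sum_(i < n) F i) = \sum_(i < n) f (F i).
Proof.
move=> fD n F; elim: n F => [|n IH] F; first by rewrite !big_ord0 (add0 _ fD).
by rewrite !big_ord_recr /= fD IH.
Qed.

Section F.
Variable f : V -> V.
Hypothesis Hf : lie_ring_aut br fullv f.

Let fI : injective f. Proof. by case: (aut_full _ Hf). Qed.
Let fS y : exists x, f x = y. Proof. by case: (aut_full _ Hf). Qed.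
Let fD x y : f (x + y) = f x + f y. Proof. by case: (aut_full _ Hf). Qed.
Let fM x y : f (br x y) = br (f x) (f y). Proof. by case: (aut_full _ Hf). Qed.
Let f0 : f 0 = 0. Proof. exact: add0. Qed.
Let fN x : f (- x) = - f x. Proof. exact: addN. Qed.
Let fB x y : f (x - y) = f x - f y. Proof. by rewrite fD fN. Qed.

Let fSb y : exists x, f x == y. Proof. by have [x e] := fS y; exists x; apply/eqP. Qed.
Let finv y := xchoose (fSb y).
Let finvK y : f (finv y) = y. Proof. exact: eqP (xchooseP (fSb y)). Qed.

Lemma zc_f x : zc x -> zc (f x).
Proof. by move=> h y; rewrite -(finvK y) -fM h f0. Qed.
Lemma zc_finv x : zc (f x) -> zc x.
Proof. by move=> h y; apply: fI; rewrite fM h f0. Qed.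

Lemma der_f x : in_derived br N0 x -> in_derived br N0 (f x).
Proof.
case=> n [a [b [Hab' ->]]].
exists n, (fun i => p0 (f (a i))), (fun i => p0 (f (b i))); split.
  by move=> i; rewrite !p0N.
rewrite (addsum _ fD); apply: eq_bigr => i _; rewrite fM; exact: brp.
Qed.

Lemma der_fsurj y : in_derived br N0 y -> exists2 x, in_derived br N0 x & f x = y.
Proof.
case=> n [a [b [Hab' ->]]].
exists (\sum_(i < n) br (p0 (finv (a i))) (p0 (finv (b i)))).
  exists n, (fun i => p0 (finv (a i))), (fun i => p0 (finv (b i))); split=> //.
  by move=> i; rewrite !p0N.
rewrite (addsum _ fD); apply: eq_bigr => i _; by rewrite -brp fM !finvK.
Qed.

Lemma kerlemma n : n \in N0 -> p0 (f n) = 0 -> n = 0.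
Proof.
move=> Hn h.
have eA : f n = p1 (f n) by rewrite -{1}(p01 (f n)) h add0r.
have zn : zc n by apply: zc_finv; rewrite eA; apply: zcA; apply: p1A.
have cn : in_center br N0 n by split=> // y _; apply: zn.
have dn := der_f _ (proj2 (Hdz n) cn).
have fn0 : f n = 0 by apply: capNA; [exact: derived_N0 | rewrite eA p1A].
by apply: fI; rewrite fn0 f0.
Qed.

Definition h0 x := p0 (f x).

Lemma h0_aut : lie_ring_aut br N0 h0.
Proof.
split.
- by move=> x _; apply: p0N.
- move=> x y Hx Hy e; apply/eqP; rewrite -subr_eq0; apply/eqP.
  apply: kerlemma; first by rewrite memvB.
  by rewrite fB linearB /= -/(h0 x) -/(h0 y) e subrr.
- move=> y Hy; set u := finv y; set m := p0 (f (p1 u)).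
  have cm : in_center br N0 m by apply: center_zc; apply: zc_f; apply: zcA; apply: p1A.
  have [w dw fw] := der_fsurj _ (proj2 (Hdz m) cm).
  exists (p0 u + w); first by rewrite memvD ?p0N ?derived_N0.
  rewrite /h0 fD linearD /= fw (p0_id (p0N _)) /m -linearD /= -fD p01 finvK.
  exact: p0_id.
- by move=> x y _ _; rewrite /h0 fD linearD.
- move=> x y _ _; rewrite /h0 fM p0_id ?brN0 //; exact: brp.
Qed.

End F.

Definition ext (h : V -> V) x := h (p0 x) + p1 x.

Lemma ext_p0 h x : (forall n, n \in N0 -> h n \in N0) -> p0 (ext h x) = h (p0 x).
Proof. by move=> hN; rewrite /ext (p0NA (hN _ (p0N x)) (p1A x)). Qed.
Lemma ext_p1 h x : (forall n, n \in N0 -> h n \in N0) -> p1 (ext h x) = p1 x.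
Proof. by move=> hN; rewrite /ext (p1NA (hN _ (p0N x)) (p1A x)). Qed.

Lemma ext_aut h : lie_ring_aut br N0 h -> lie_ring_aut br fullv (ext h).
Proof.
case=> hN hI hS hD hM; apply: aut_fullI.
- move=> x y e.
  have [e1 e2] := uniqNA (hN _ (p0N x)) (p1A x) (hN _ (p0N y)) (p1A y) e.
  by rewrite -(p01 x) -(p01 y) e2 (hI _ _ (p0N x) (p0N y) e1).
- move=> y; have [n Hn e] := hS _ (p0N y); exists (n + p1 y).
  by rewrite /ext (p0NA Hn (p1A y)) (p1NA Hn (p1A y)) e p01.
- by move=> x y; rewrite /ext !linearD /= hD ?p0N // addrACA.
- move=> x y; rewrite /ext (p1_N (brN0 x y)) addr0 (p0_id (brN0 x y)) brp hM ?p0N //.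
  by rewrite [in RHS]brp (p0NA (hN _ (p0N x)) (p1A x)) (p0NA (hN _ (p0N y)) (p1A y)).
Qed.

Lemma center_full z : in_center br fullv z <-> zc z.
Proof. by split=> [[_ h] y | h]; [apply: h; rewrite memvf | split=> [|y _]; rewrite ?memvf]. Qed.

Lemma ext_central h : central_aut br N0 h -> central_aut br fullv (ext h).
Proof.
case=> Ha Hc; split; first exact: ext_aut.
move=> x _; apply/center_full.
have -> : ext h x - x = h (p0 x) - p0 x.
  by rewrite /ext -{3}(p01 x) opprD addrACA subrr addr0.
by apply: zc_center; apply: Hc; apply: p0N.
Qed.

Lemma ext_lin h : lin_lie_aut br N0 h -> lin_lie_aut br fullv (ext h).
Proof.
case=> Ha hZ; split; first exact: ext_aut.
by move=> a x _; rewrite /ext !linearZ /= hZ ?p0N // scalerDr.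
Qed.

Lemma aut_comp f g : lie_ring_aut br fullv f -> lie_ring_aut br fullv g ->
  lie_ring_aut br fullv (f \o g).
Proof.
move=> /aut_full[fI fS fD fM] /aut_full[gI gS gD gM]; apply: aut_fullI.
- exact: inj_comp.
- by move=> y; have [x <-] := fS y; have [z <-] := gS x; exists z.
- by move=> x y /=; rewrite gD fD.
- by move=> x y /=; rewrite gM fM.
Qed.

Lemma central_comp m1 m2 : central_aut br fullv m1 -> central_aut br fullv m2 ->
  central_aut br fullv (m1 \o m2).
Proof.
case=> H1 C1 [H2 C2]; split; first exact: aut_comp.
move=> x _; apply/center_full.
have -> : (m1 \o m2) x - x = (m1 (m2 x) - m2 x) + (m2 x - x).
  by rewrite /= addrA subrK.
by apply: zcD; apply/center_full; [apply: C1 | apply: C2]; rewrite memvf.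
Qed.

Lemma part1 f : lie_ring_aut br fullv f ->
     exists mu g,
       [/\ central_aut br fullv mu,
           lie_ring_aut br fullv g,
           (forall x, x \in N0 -> g x \in N0)
             /\ (forall y, y \in N0 -> exists2 x, x \in N0 & g x = y),
           (forall y, y \in A -> g y = y) &
           (forall x, f x = mu (g x))].
Proof.
move=> Hf; set g := ext (h0 f).
have Hh := h0_aut _ Hf.
have Hg : lie_ring_aut br fullv g := ext_aut _ Hh.
have [gI gS gD gM] := aut_full _ Hg.
have [fI fS fD fM] := aut_full _ Hf.
have gSb y : exists x, g x == y by have [x e] := gS y; exists x; apply/eqP.
pose ginv y := xchoose (gSb y).
have ginvK y : g (ginv y) = y by exact: eqP (xchooseP (gSb y)).
have ginvg x : ginv (g x) = x by apply: gI; rewrite ginvK.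
have Hginv : lie_ring_aut br fullv ginv.
  apply: aut_fullI.
  - by move=> x y e; rewrite -(ginvK x) e ginvK.
  - by move=> y; exists (g y).
  - by move=> x y; apply: gI; rewrite gD !ginvK.
  - by move=> x y; apply: gI; rewrite gM !ginvK.
exists (f \o ginv), g; split=> //.
- split; first exact: aut_comp.
  move=> x _; apply/center_full; rewrite /= -{2}(ginvK x); set z := ginv x.
  rewrite /g /ext /h0 -{1}(p01 z) fD -{1}(p01 (f (p0 z))).
  rewrite opprD addrACA (addrAC (p0 _)) subrr add0r.
  apply: zcD; first by apply: zcA; apply: p1A.
  apply: zcD; first by apply: (zc_f _ Hf); apply: zcA; apply: p1A.
  by apply: zcN; apply: zcA; apply: p1A.
- split.
    by move=> x Hx; rewrite /g /ext (p1_N Hx) addr0 p0_id // p0N.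
  move=> y Hy; case: Hh => _ _ hS _ _; have [x Hx e] := hS y Hy.
  by exists x => //; rewrite /g /ext (p1_N Hx) addr0 p0_id.
- by move=> y Hy; rewrite /g /ext /h0 (p0_A Hy) (add0 _ fD) linear0 add0r p1_id.
- by move=> x /=; rewrite ginvg.
Qed.

Lemma piece_in (I : {vspace V}) s x : field_aut_piece br I s -> x \in I -> s x \in I.
Proof.
case=> [h Hx | [J [m [e [phi [gam [HJ [He Hc Hu] _ _ Hs]]]]]] Hx]; first by rewrite h.
have [c ->] := Hc x Hx; rewrite Hs /csum; apply: memv_suml => l _.
rewrite /cscale; apply: memvD; apply: memvZ; first exact: He.
by case: HJ => HJ _ _ _; apply: HJ (He l).
Qed.

Lemma field_in (U : {vspace V}) s : field_aut br U s -> forall x, x \in U -> s x \in U.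
Proof.
case=> k [Ns [sg [Hs Hd Hi Hp Hf]]] x Hx.
move: (Hx); rewrite -Hs => /memv_sumP [xs Hxs ->].
rewrite Hf; last by move=> i; apply: Hxs.
by apply: memv_sumr => i _; apply: piece_in (Hp i) (Hxs i _).
Qed.

Lemma field_ext s0 : field_aut br N0 s0 -> field_aut br fullv (ext s0).
Proof.
case=> k [Ns [sg [Hs Hd Hi Hp Hf]]].
pose Ns' (i : 'I_k.+1) := if unlift ord0 i is Some j then Ns j else A.
pose sg' (i : 'I_k.+1) := if unlift ord0 i is Some j then sg j else id.
have NsL j : Ns' (lift ord0 j) = Ns j by rewrite /Ns' liftK.
have Ns0 : Ns' ord0 = A by rewrite /Ns' unlift_none.
exists k.+1, Ns', sg'; split.
- rewrite big_ord_recl Ns0.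
  have -> : (\sum_(i < k) Ns' (lift ord0 i))%VS = (\sum_(i < k) Ns i)%VS.
    by apply: eq_bigr => i _; rewrite NsL.
  by rewrite Hs addvC.
- apply/directv_sum_independent => us Hus Hsum0 i _.
  rewrite big_ord_recl in Hsum0.
  have Hu0 : us ord0 \in A by rewrite -Ns0; apply: Hus.
  have HuS j : us (lift ord0 j) \in Ns j by rewrite -NsL; apply: Hus.
  have Hsn : \sum_(j < k) us (lift ord0 j) \in N0 by rewrite -Hs; apply: memv_sumr.
  have [e1 e2] := uniqNA Hsn Hu0 (mem0v N0) (mem0v A) (etrans (addrC _ _) (etrans Hsum0 (esym (addr0 0)))).
  move/directv_sum_independent: Hd => Hd.
  have Hz := Hd (fun j => us (lift ord0 j)) (fun j _ => HuS j) e1.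
  by case: (unliftP ord0 i) => [j -> | ->]; [exact: Hz | exact: e2].
- move=> i; rewrite /Ns'; case: (unlift ord0 i) => [j|]; last exact: HA.
  have [Hsub Hid] := Hi j; split; first exact: subvf.
  move=> x y _ Hy; have yN : y \in N0 by apply: (subvP Hsub).
  by rewrite brp (p0_id yN); apply: Hid (p0N x) Hy.
- move=> i; rewrite /Ns' /sg'; case: (unlift ord0 i) => [j|]; [exact: Hp | by left].
- move=> xs Hxs; rewrite !big_ord_recl.
  have Hu0 : xs ord0 \in A by rewrite -Ns0; apply: Hxs.
  have HuS j : xs (lift ord0 j) \in Ns j by rewrite -NsL; apply: Hxs.
  have Hsn : \sum_(j < k) xs (lift ord0 j) \in N0 by rewrite -Hs; apply: memv_sumr.
  have -> : \sum_(i < k) sg' (lift ord0 i) (xs (lift ord0 i)) =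
            \sum_(i < k) sg i (xs (lift ord0 i)).
    by apply: eq_bigr => i _; rewrite /sg' liftK.
  rewrite /ext [xs ord0 + _]addrC (p0NA Hsn Hu0) (p1NA Hsn Hu0) (Hf _ HuS) addrC.
  by rewrite /sg' unlift_none.
Qed.

Lemma part2 : partial_auto_continuity br N0 -> partial_auto_continuity br fullv.
Proof.
move=> Hp f Hf.
have [mu [g [Hmu Hg [gN gS] gA fe]]] := part1 _ Hf.
have [gI _ gD gM] := aut_full _ Hg.
have HgN : lie_ring_aut br N0 g.
  split; [exact: gN | by move=> x y _ _; apply: gI | exact: gS
          | by move=> x y _ _; apply: gD | by move=> x y _ _; apply: gM].
have [mu0 [fb0 [s0 [Hmu0 Hfb0 Hs0 e0]]]] := Hp g HgN.
have m0N : forall n, n \in N0 -> mu0 n \in N0 by case: Hmu0 => [[]].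
have f0N : forall n, n \in N0 -> fb0 n \in N0 by case: Hfb0 => [[]].
have s0N := field_in _ _ Hs0.
exists (mu \o ext mu0), (ext fb0), (ext s0); split.
- exact: central_comp Hmu (ext_central _ Hmu0).
- exact: ext_lin.
- exact: field_ext.
- move=> x _; rewrite fe /=; congr mu.
  rewrite -{1}(p01 x) gD (gA _ (p1A x)) (e0 _ (p0N x)).
  rewrite /ext ext_p0 // ext_p1 // ext_p0 // ext_p1 //.
Qed.

End P.

Theorem proposition3p4 (R : realType) (V : vectType R) (br : V -> V -> V)
    (N0 A : {vspace V}) :
  is_lie_bracket br ->
  two_step_nilpotent br ->
  (N0 + A)%VS = fullv ->
  directv (N0 + A) ->
  is_ideal_of br fullv N0 ->
  is_ideal_of br fullv A ->
  abelian_sub br A ->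
  (forall x, in_derived br N0 x <-> in_center br N0 x) ->
  (forall f, lie_ring_aut br fullv f ->
     exists mu g,
       [/\ central_aut br fullv mu,
           lie_ring_aut br fullv g,
           (forall x, x \in N0 -> g x \in N0)
             /\ (forall y, y \in N0 -> exists2 x, x \in N0 & g x = y),
           (forall y, y \in A -> g y = y) &
           (forall x, f x = mu (g x))])
  /\ (partial_auto_continuity br N0 -> partial_auto_continuity br fullv).
Proof.
move=> Hl _ Hs Hd HN HA Hab Hdz; split.
- exact: (@part1 R V br N0 A Hl Hs Hd HN HA Hab Hdz).
- exact: (@part2 R V br N0 A Hl Hs Hd HN HA Hab Hdz).
Qed.
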